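(* Let $\Gamma$ be a regular social purpose game. Then for every Nash equilibrium $x^{NE}$ and every social optimum $x^{SO}$ of $\Gamma$, $$\sum_{i=1}^n x^{NE}_i\le\sum_{i=1}^n x^{SO}_i.$$
   Context: A social purpose game $\Gamma=\langle N,\overline{Q},H,(\alpha_i,h_i,g_i)_{i\in N}\rangle$ consists of a player set $N=\{1,\dots,n\}$ with $n\ge 2$, a number $\overline{Q}>0$ such that every player's strategy set is $S_i=[0,\overline{Q}]$, a function $H\colon\mathbb{R}\to\mathbb{R}$, and for each $i\in N$ a weight $\alpha_i>0$ and functions $h_i,g_i\colon[0,\overline{Q}]\to\mathbb{R}$. The payoff of player $i$ at $x\in[0,\overline{Q}]^N$ is $\pi_i(x)=\alpha_i H\big(\sum_{j=1}^n h_j(x_j)\big)-g_i(x_i)$. A Nash equilibrium is a profile $x^*$ with $\pi_i(x^* )\ge\pi_i(y_i,x^*_{-i})$ for all $i$ and all $y_i$; a social optimum is a maximizer of $\sum_{i\in N}\pi_i$ over $[0,\overline{Q}]^N$. $\Gamma$ is regular if: each $h_i$ is the identity $h_i(x_i)=x_i$; $H$ is continuously differentiable, increasing and concave; and each $g_i$ is continuously differentiable, increasing and convex. *)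

(* Defs.v *)
From Stdlib Require Import Reals.
From Coquelicot Require Import Coquelicot.
Open Scope R_scope.

(* Players are indexed 0..n-1 (paper: 1..n). Profiles x : nat -> R,
   only the values x i with i < n matter. *)

Definition total (n : nat) (x : nat -> R) : R := sum_f_R0 x (pred n).
(* sum_f_R0 x (n-1) = x 0 + ... + x (n-1) for n >= 1 *)

Definition in_box (Qbar : R) (n : nat) (x : nat -> R) : Prop :=
  forall i, (i < n)%nat -> 0 <= x i <= Qbar.

Definition payoff (n : nat) (H : R -> R) (alpha : nat -> R)
  (h g : nat -> R -> R) (x : nat -> R) (i : nat) : R :=
  alpha i * H (sum_f_R0 (fun j => h j (x j)) (pred n)) - g i (x i).

Definition upd (x : nat -> R) (i : nat) (y : R) : nat -> R :=
  fun j => if Nat.eqb j i then y else x j.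

Definition is_NE (n : nat) (Qbar : R) (H : R -> R) (alpha : nat -> R)
  (h g : nat -> R -> R) (x : nat -> R) : Prop :=
  in_box Qbar n x /\
  forall i, (i < n)%nat -> forall y, 0 <= y <= Qbar ->
    payoff n H alpha h g x i >= payoff n H alpha h g (upd x i y) i.

Definition welfare (n : nat) (H : R -> R) (alpha : nat -> R)
  (h g : nat -> R -> R) (x : nat -> R) : R :=
  sum_f_R0 (payoff n H alpha h g x) (pred n).

Definition is_SO (n : nat) (Qbar : R) (H : R -> R) (alpha : nat -> R)
  (h g : nat -> R -> R) (x : nat -> R) : Prop :=
  in_box Qbar n x /\
  forall y, in_box Qbar n y ->
    welfare n H alpha h g x >= welfare n H alpha h g y.

Definition C1 (f : R -> R) : Prop :=
  (forall x, ex_derive f x) /\ (forall x, continuous (Derive f) x).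

Definition C1_on (a b : R) (f : R -> R) : Prop :=
  (forall x, a <= x <= b -> ex_derive f x) /\
  (forall x, a <= x <= b ->
     filterlim (Derive f) (within (fun y => a <= y <= b) (locally x))
       (locally (Derive f x))).

Definition increasing_on (a b : R) (f : R -> R) : Prop :=
  forall x y, a <= x <= b -> a <= y <= b -> x < y -> f x < f y.

Definition increasing (f : R -> R) : Prop := forall x y, x < y -> f x < f y.

Definition concave (f : R -> R) : Prop :=
  forall x y t, 0 <= t <= 1 -> t * f x + (1 - t) * f y <= f (t * x + (1 - t) * y).

Definition convex_on (a b : R) (f : R -> R) : Prop :=
  forall x y t, a <= x <= b -> a <= y <= b -> 0 <= t <= 1 ->
    f (t * x + (1 - t) * y) <= t * f x + (1 - t) * f y.

Definition regular (n : nat) (Qbar : R) (H : R -> R) (alpha : nat -> R)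
  (h g : nat -> R -> R) : Prop :=
  (2 <= n)%nat /\ 0 < Qbar /\
  (forall i, (i < n)%nat -> 0 < alpha i) /\
  (forall i, (i < n)%nat -> forall t, 0 <= t <= Qbar -> h i t = t) /\
  C1 H /\ increasing H /\ concave H /\
  (forall i, (i < n)%nat ->
     C1_on 0 Qbar (g i) /\ increasing_on 0 Qbar (g i) /\ convex_on 0 Qbar (g i)).

(* Main.v *)
Require Import Defs.
From Stdlib Require Import Reals Lra Lia Psatz.
From Coquelicot Require Import Coquelicot.
Open Scope R_scope.

Lemma chord_conv (Q : R) (g : R -> R) a c t :
  convex_on 0 Q g -> 0 <= a -> a <= c -> 0 < t -> c + t <= Q ->
  g (a + t) - g a <= g (c + t) - g c.
Proof.
  intros Hc Ha Hac Ht HQ.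
  destruct (Req_dec a c) as [E|E]. { subst; lra. }
  set (l := (c - a) / (c + t - a)).
  assert (Hl : 0 <= l <= 1).
  { unfold l; split.
    - apply Rdiv_le_0_compat; lra.
    - apply Rmult_le_reg_r with (c + t - a); [lra|].
      unfold Rdiv; rewrite Rmult_assoc, Rinv_l; lra. }
  assert (E2 : c = (1 - l) * a + (1 - (1 - l)) * (c + t)).
  { unfold l; field; lra. }
  assert (E1 : a + t = l * a + (1 - l) * (c + t)).
  { unfold l; field; lra. }
  assert (H1 := Hc a (c + t) l ltac:(lra) ltac:(lra) Hl).
  assert (H2 := Hc a (c + t) (1 - l) ltac:(lra) ltac:(lra) ltac:(lra)).
  rewrite <- E1 in H1. rewrite <- E2 in H2. lra.
Qed.

Lemma chord_conc (H : R -> R) a c t :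
  concave H -> a <= c -> 0 < t ->
  H (c + t) - H c <= H (a + t) - H a.
Proof.
  intros Hc Hac Ht.
  destruct (Req_dec a c) as [E|E]. { subst; lra. }
  set (l := (c - a) / (c + t - a)).
  assert (Hl : 0 <= l <= 1).
  { unfold l; split.
    - apply Rdiv_le_0_compat; lra.
    - apply Rmult_le_reg_r with (c + t - a); [lra|].
      unfold Rdiv; rewrite Rmult_assoc, Rinv_l; lra. }
  assert (E2 : c = (1 - l) * a + (1 - (1 - l)) * (c + t)).
  { unfold l; field; lra. }
  assert (E1 : a + t = l * a + (1 - l) * (c + t)).
  { unfold l; field; lra. }
  assert (H1 := Hc a (c + t) l Hl).
  assert (H2 := Hc a (c + t) (1 - l) ltac:(lra)).
  rewrite <- E1 in H1. rewrite <- E2 in H2. lra.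
Qed.

Lemma sum_upd (F : nat -> R -> R) x i y N : (i <= N)%nat ->
  sum_f_R0 (fun j => F j (upd x i y j)) N =
  sum_f_R0 (fun j => F j (x j)) N + (F i y - F i (x i)).
Proof.
  induction N as [|N IH]; intros Hi.
  - assert (i = 0%nat) by lia; subst; simpl; unfold upd; simpl; lra.
  - simpl. destruct (Nat.eq_dec i (S N)) as [E|E].
    + subst.
      rewrite (sum_eq (fun j => F j (upd x (S N) y j)) (fun j => F j (x j))).
      * unfold upd; rewrite Nat.eqb_refl; lra.
      * intros j Hj; unfold upd; destruct (Nat.eqb_spec j (S N)); [lia|reflexivity].
    + rewrite IH by lia. unfold upd at 1.
      destruct (Nat.eqb_spec (S N) i); [lia|]. lra.
Qed.

Lemma sum_lin (al G : nat -> R) c N :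
  sum_f_R0 (fun j => al j * c - G j) N = sum_f_R0 al N * c - sum_f_R0 G N.
Proof. induction N; simpl; [lra|]. rewrite IHN; lra. Qed.

Lemma sum_ge_one (f : nat -> R) N i : (forall j, (j <= N)%nat -> 0 <= f j) ->
  (i <= N)%nat -> f i <= sum_f_R0 f N.
Proof.
  revert i; induction N as [|N IH]; intros i Hf Hi.
  - assert (i = 0%nat) by lia; subst; simpl; lra.
  - simpl. destruct (Nat.eq_dec i (S N)) as [E|E].
    + subst. assert (f 0%nat <= sum_f_R0 f N) by (apply IH; [intros; apply Hf; lia| lia]).
      assert (0 <= f 0%nat) by (apply Hf; lia). lra.
    + assert (f i <= sum_f_R0 f N) by (apply IH; [intros; apply Hf; lia| lia]).
      assert (0 <= f (S N)) by (apply Hf; lia). lra.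
Qed.

Lemma exists_gt (f g : nat -> R) N : sum_f_R0 g N < sum_f_R0 f N ->
  exists i, (i <= N)%nat /\ g i < f i.
Proof.
  induction N as [|N IH]; simpl; intros Hs.
  - exists 0%nat; split; [lia|lra].
  - destruct (Rlt_dec (g (S N)) (f (S N))) as [L|L].
    + exists (S N); split; [lia|lra].
    + destruct IH as [i [Hi Hg]]; [lra|]. exists i; split; [lia|lra].
Qed.

Lemma sum_h (n : nat) (Q : R) (h : nat -> R -> R) x :
  (forall i, (i < n)%nat -> forall t, 0 <= t <= Q -> h i t = t) ->
  (2 <= n)%nat -> in_box Q n x ->
  sum_f_R0 (fun j => h j (x j)) (pred n) = total n x.
Proof.
  intros Hh Hn Hb. unfold total. apply sum_eq. intros j Hj.
  apply Hh; [lia|]. apply Hb; lia.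
Qed.

Lemma in_box_upd Q n x i y : in_box Q n x -> 0 <= y <= Q -> in_box Q n (upd x i y).
Proof.
  intros Hb Hy j Hj. unfold upd. destruct (Nat.eqb j i); auto.
Qed.

Theorem proposition5 (n : nat) (Qbar : R) (H : R -> R) (alpha : nat -> R)
  (h g : nat -> R -> R) :
  regular n Qbar H alpha h g ->
  forall xNE xSO : nat -> R,
    is_NE n Qbar H alpha h g xNE ->
    is_SO n Qbar H alpha h g xSO ->
    total n xNE <= total n xSO.
Proof.
  intros [Hn [HQ [Hal [Hh [_ [Hinc [Hconc Hg]]]]]]] xNE xSO [HbN HNE] [HbS HSO].
  destruct (Rle_dec (total n xNE) (total n xSO)) as [L|L]; [exact L|].
  exfalso. apply Rnot_le_lt in L.
  set (N := pred n) in *.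
  assert (HiN : forall i, (i <= N)%nat <-> (i < n)%nat) by (intros; unfold N; lia).
  destruct (exists_gt xNE xSO N L) as [i [Hi Hab]].
  assert (Hin : (i < n)%nat) by (apply HiN; exact Hi).
  set (a := xSO i) in *. set (b := xNE i) in *.
  set (X := total n xSO) in *. set (Z := total n xNE) in *.
  set (t := Rmin (b - a) (Z - X)).
  assert (Ht : 0 < t) by (unfold t; apply Rmin_glb_lt; lra).
  assert (Ht1 : t <= b - a) by apply Rmin_l.
  assert (Ht2 : t <= Z - X) by apply Rmin_r.
  assert (Ba := HbS i Hin). assert (Bb := HbN i Hin). fold a in Ba. fold b in Bb.
  destruct (Hg i Hin) as [_ [_ Hgc]].
  assert (HN := HNE i Hin (b - t) ltac:(lra)).
  unfold payoff in HN.
  rewrite (sum_h n Qbar h xNE Hh Hn HbN) in HN.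
  rewrite (sum_h n Qbar h _ Hh Hn (in_box_upd _ _ _ i (b - t) HbN ltac:(lra))) in HN.
  assert (TU : total n (upd xNE i (b - t)) = Z - t).
  { unfold Z, total; fold N. rewrite (sum_upd (fun _ r => r)) by exact Hi. unfold b. assert (E0 : sum_f_R0 (fun j => xNE j) N = sum_f_R0 xNE N) by reflexivity. lra. }
  rewrite TU in HN. unfold upd in HN. rewrite Nat.eqb_refl in HN.
  change (xNE i) with b in HN. change (total n xNE) with Z in HN.
  assert (HbY := in_box_upd _ _ _ i (a + t) HbS ltac:(lra)).
  assert (HS := HSO _ HbY).
  unfold welfare, payoff in HS.
  rewrite (sum_h n Qbar h xSO Hh Hn HbS) in HS.
  rewrite (sum_h n Qbar h _ Hh Hn HbY) in HS.
  fold N in HS.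
  rewrite !sum_lin in HS.
  rewrite (sum_upd g) in HS by exact Hi.
  assert (TS : total n (upd xSO i (a + t)) = X + t).
  { unfold X, total; fold N. rewrite (sum_upd (fun _ r => r)) by exact Hi. unfold a. assert (E0 : sum_f_R0 (fun j => xSO j) N = sum_f_R0 xSO N) by reflexivity. lra. }
  rewrite TS in HS. change (total n xSO) with X in HS. change (xSO i) with a in HS.
  assert (C1 := chord_conv Qbar (g i) a (b - t) t Hgc ltac:(lra) ltac:(lra) Ht ltac:(lra)).
  replace (b - t + t) with b in C1 by ring.
  assert (C2 := chord_conc H X (Z - t) t Hconc ltac:(lra) Ht).
  replace (Z - t + t) with Z in C2 by ring.
  assert (Hs : H X < H (X + t)) by (apply Hinc; lra).
  set (A := sum_f_R0 alpha N) in *.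
  assert (HA : alpha i < A).
  { assert (E := sum_upd (fun _ r => r) alpha i 0 N Hi). simpl in E.
    set (k := if Nat.eqb i 0 then 1%nat else 0%nat).
    assert (Hk : (k <= N)%nat /\ k <> i).
    { unfold k; destruct (Nat.eqb_spec i 0); unfold N in *; lia. }
    assert (Ge := sum_ge_one (upd alpha i 0) N k).
    assert (Hk2 : upd alpha i 0 k = alpha k).
    { unfold upd; destruct (Nat.eqb_spec k i); [lia|reflexivity]. }
    assert (Hpos : 0 < alpha k) by (apply Hal; apply HiN; lia).
    assert (forall j, (j <= N)%nat -> 0 <= upd alpha i 0 j).
    { intros j Hj; unfold upd; destruct (Nat.eqb j i); [lra|].
      left; apply Hal; apply HiN; exact Hj. }
    specialize (Ge H0 (proj1 Hk)). assert (E1 : sum_f_R0 (fun j => upd alpha i 0 j) N = sum_f_R0 (upd alpha i 0) N) by reflexivity. assert (E2 : sum_f_R0 (fun j => alpha j) N = A) by reflexivity. lra. }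
  assert (Hai : 0 < alpha i) by (apply Hal; exact Hin).
  nra.
Qed.
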